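(* Let $\Delta$ be an integer with $\Delta\ge 3$ and let $\varepsilon_{\Delta} = \tan(\pi/(4 (\Delta-1)))$ (so $\varepsilon_\Delta\in(0,1)$). Let $G = (V, E)$ be a graph of maximum degree at most $\Delta$. Then $Z_{\mathrm{Ising}}(G; \beta) \ne 0$ for every $\beta \in \mathbb{C}$ with $\lvert \beta - 1\rvert / \lvert \beta + 1 \rvert \le \varepsilon_\Delta$.
   Context: Graphs are undirected and may have multiple edges or loops. For a graph $G=(V,E)$ and $\beta\in\mathbb{C}$, the partition function of the Ising model is $Z_{\mathrm{Ising}}(G;\beta)=\sum_{\sigma\colon V\to\{0,1\}}\beta^{m(\sigma)}$, where $m(\sigma)$ is the number of edges of $G$ whose two endpoints receive the same value under $\sigma$ (monochromatic edges). *)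

(* Defs.v *)
From mathcomp Require Import all_boot all_order all_algebra.
From mathcomp Require Import reals trigo.
From mathcomp Require Export complex.
Set Implicit Arguments. Unset Strict Implicit. Unset Printing Implicit Defensive.
Import GRing.Theory Num.Theory.
Local Open Scope ring_scope.

(* A finite multigraph (multiple edges and loops allowed) is given by a finite
   vertex type V, a finite edge type E and an endpoint map [ends : E -> V * V]. *)

(* Degree of v: number of edge-endpoint incidences at v (a loop counts twice). *)
Definition mdeg (V E : finType) (ends : E -> V * V) (v : V) : nat :=
  (#|[set e | (ends e).1 == v]| + #|[set e | (ends e).2 == v]|)%N.

Definition mono (V E : finType) (ends : E -> V * V) (sigma : {ffun V -> bool}) : nat :=
  #|[set e | sigma (ends e).1 == sigma (ends e).2]|.

Definition Z_Ising (V E : finType) (ends : E -> V * V) (C : comRingType) (beta : C) : C :=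
  \sum_(sigma : {ffun V -> bool}) beta ^+ mono ends sigma.

Definition eps_Delta (R : realType) (Delta : nat) : R :=
  tan (pi / (4 * (Delta - 1))%:R).

(* Main.v *)
Require Import Defs.
From mathcomp Require Import all_boot all_order all_algebra.
From mathcomp Require Import reals trigo complex.
From mathcomp Require Import ring lra.
Import Order.TTheory GRing.Theory Num.Theory.
Local Open Scope ring_scope.
Local Open Scope complex_scope.


Local Notation Re := complex.Re.
Local Notation Im := complex.Im.
Section Alg.
Variable R : realType.
Definition Sec (C S : R) (z : R[i]) : Prop := z != 0 /\ (0 <= Re z)%R /\ (`|Im z| * C <= Re z * S)%R.
Definition Hp (z : R[i]) : Prop := z != 0 /\ (0 <= Re z)%R.

Lemma normC_def (a b : R) : `|a +i* b| = (Num.sqrt (a^+2 + b^+2))%:C.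
Proof. by []. Qed.

Lemma Hp_m (P : R[i]) : Hp P -> P + 1 != 0 /\ `|(P-1)/(P+1)| <= 1.
Proof.
case: P => a b [nz /= ha].
have -> : (a +i* b) + 1 = (a + 1) +i* b by simpc.
have -> : (a +i* b) - 1 = (a - 1) +i* b by simpc.
have nz1 : (a + 1) +i* b != 0.
  apply/eqP; case => ha1 _. lra.
split => //.
rewrite normrM normrV ?unitfE // ler_pdivrMr ?normr_gt0 // mul1r.
rewrite !normC_def lecR ler_sqrt; last by rewrite addr_ge0 ?sqr_ge0.
rewrite lerD2r; nra.
Qed.

Lemma Sec_cpt (C S a b : R) : 0 <= C -> 0 <= S -> 0 < a -> `|b| * C <= a * S -> Sec C S (a +i* b).
Proof.
move=> C0 S0 a0 h; split; last by split => //=; exact: ltW.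
by apply/eqP; case => /= a0'; move: a0; rewrite a0' ltxx.
Qed.

Lemma msg (c s : R) (z : R[i]) : 0 < c -> 0 <= s -> s < c -> `|z| <= (s / c)%:C ->
  Sec (c * c - s * s) (s * c + c * s) ((1 + z) / (1 - z)).
Proof.
case: z => x y c0 s0 sc; rewrite normC_def lecR ler_pdivlMr //.
set r := Num.sqrt _ => hr.
have r0 : 0 <= r by apply: sqrtr_ge0.
have r2 : r ^+ 2 = x ^+ 2 + y ^+ 2 by rewrite sqr_sqrtr // addr_ge0 ?sqr_ge0.
have rlt : r < 1.
  have : r * c < c by apply: (le_lt_trans hr).
  by rewrite -{2}[c]mul1r ltr_pM2r.
have yr : `|y| <= r.
  rewrite -(ler_pXn2r (_ : (0 < 2)%N)) ?nnegrE ?normr_ge0 // real_normK ?num_real //.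
  rewrite r2; nra.
have ay : `|y| ^+ 2 = y ^+ 2 by rewrite real_normK ?num_real.
set n := (1 - x) ^+ 2 + y ^+ 2.
have n0 : 0 < n.
  rewrite /n; have : x < 1 by nra.
  move=> x1; have : 0 < (1 - x) ^+ 2 by rewrite exprn_gt0 // subr_gt0.
  move=> h; apply: (lt_le_trans h); rewrite lerDl sqr_ge0 //.
have nz : 1 - (x +i* y) != 0.
  apply/eqP; simpc; case => /= h _; nra.
have -> : (1 + (x +i* y)) / (1 - (x +i* y)) = ((1 - x^+2 - y^+2) / n) +i* ((2 * y) / n).
  apply: (mulIf nz); rewrite mulfVK //; simpc.
  congr Complex; rewrite /n; field; rewrite -/n gt_eqF //.
apply: Sec_cpt.
- nra.
- nra.
- apply: divr_gt0 => //; nra.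
have N: `|2 * y / n| = `|y| * 2 / n.
  have ni : 0 <= n^-1 by rewrite invr_ge0 ltW.
  rewrite normrM normrM (ger0_norm ni) normr_nat; ring.
rewrite N -!mulrA [n^-1 * _]mulrC [n^-1 * _]mulrC !mulrA ler_pM2r ?invr_gt0 //.
have cs : 0 <= c * c - s * s by nra.
have h1 : `|y| * 2 * (c * c - s * s) <= r * 2 * (c * c - s * s).
  by apply: ler_wpM2r => //; nra.
have h2 : (r * c - s) * (c + r * s) <= 0.
  apply: mulr_le0_ge0; [lra | nra].
have -> : 1 - x ^+ 2 - y ^+ 2 = 1 - r ^+ 2 by rewrite r2; ring.
apply: (le_trans h1); nra.
Qed.

Lemma Sec_mul (C1 S1 C2 S2 : R) (z1 z2 : R[i]) : 0 < C1 -> 0 < C2 -> 0 <= S1 -> 0 <= S2 ->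
  0 <= C1 * C2 - S1 * S2 -> Sec C1 S1 z1 -> Sec C2 S2 z2 ->
  Sec (C1 * C2 - S1 * S2) (S1 * C2 + C1 * S2) (z1 * z2).
Proof.
move=> C10 C20 S10 S20 K0 [nz1 [/= a0 h1]] [nz2 [/= c0 h2]].
move: nz1 nz2 a0 h1 c0 h2; case: z1 => a b; case: z2 => c d /= nz1 nz2 a0 h1 c0 h2.
have nz : (a +i* b) * (c +i* d) != 0 by rewrite mulf_neq0.
move: nz; simpc => nz; split => //=.
have B0 : 0 <= `|b| := normr_ge0 b.
have D0 : 0 <= `|d| := normr_ge0 d.
have hbd : b * d <= `|b| * `|d| by rewrite -normrM ler_norm.
have hBD : `|b| * C1 * (`|d| * C2) <= a * S1 * (c * S2).
  apply: ler_pM => //; apply: mulr_ge0 => //; exact: ltW.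
have CC : 0 < C1 * C2 by apply: mulr_gt0.
have hre : a * c * (C1 * C2 - S1 * S2) <= (a * c - b * d) * (C1 * C2) by nra.
have re0 : 0 <= a * c - b * d.
  have : 0 <= (a * c - b * d) * (C1 * C2).
    apply: le_trans hre; apply: mulr_ge0 => //; exact: mulr_ge0.
  by rewrite pmulr_lge0.
split => //.
have him : `|a * d + b * c| <= a * `|d| + `|b| * c.
  apply: (le_trans (ler_normD _ _)); rewrite !normrM (ger0_norm a0) (ger0_norm c0) //.
have m1 : a * C1 * (`|d| * C2) <= a * C1 * (c * S2).
  by apply: ler_wpM2l => //; apply: mulr_ge0 => //; exact: ltW.
have m2 : `|b| * C1 * (c * C2) <= a * S1 * (c * C2).
  by apply: ler_wpM2r => //; apply: mulr_ge0 => //; exact: ltW.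
have hm : (a * `|d| + `|b| * c) * (C1 * C2) <= a * c * (S1 * C2 + C1 * S2).
  have -> : (a * `|d| + `|b| * c) * (C1 * C2) = a * C1 * (`|d| * C2) + `|b| * C1 * (c * C2) by ring.
  have -> : a * c * (S1 * C2 + C1 * S2) = a * S1 * (c * C2) + a * C1 * (c * S2) by ring.
  by rewrite addrC lerD.
rewrite -(ler_pM2r CC).
set K := C1 * C2 - S1 * S2 in K0 hre *.
set L := S1 * C2 + C1 * S2 in hm *.
have L0 : 0 <= L by rewrite /L addr_ge0 // mulr_ge0 // ltW.
have e1 : `|a * d + b * c| * K * (C1 * C2) <= (a * `|d| + `|b| * c) * (C1 * C2) * K.
  rewrite mulrAC; apply: ler_wpM2r => //; apply: ler_wpM2r => //; exact: ltW.
have e2 : (a * `|d| + `|b| * c) * (C1 * C2) * K <= a * c * L * K by apply: ler_wpM2r.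
have e3 : a * c * L * K <= (a * c - b * d) * L * (C1 * C2).
  by rewrite mulrAC [X in _ <= X]mulrAC; apply: ler_wpM2r.
exact: le_trans e1 (le_trans e2 e3).
Qed.

Lemma Sec_Hp C S z : Sec C S z -> Hp z.
Proof. by case=> nz [h _]. Qed.

Lemma root_ne (C S : R) (x p : R[i]) : 0 < C -> Hp p -> Sec C S x -> x * p != -1.
Proof.
move=> C0 [nzp /= hp] [nzx [/= hx hxi]].
move: nzp nzx hp hx hxi; case: x => a b; case: p => c d /= nzp nzx hc ha hab.
have a0 : 0 < a.
  rewrite lt_def ha andbT; apply/eqP => a0; move: hab; rewrite a0 mul0r.
  move=> hb; have : `|b| <= 0.
    by rewrite -(pmulr_lle0 _ C0).
  rewrite normr_le0 => /eqP b0; move: nzx; rewrite a0 b0.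
  by rewrite eqxx.
simpc; apply/eqP; case=> e1 e2.
have : a * (a * c - b * d) + b * (a * d + b * c) = c * (a ^+ 2 + b ^+ 2) by ring.
rewrite e1 e2; nra.
Qed.

Lemma edge_map (c s : R) (w P : R[i]) : 0 < c -> 0 <= s -> s < c -> `|w| <= (s / c)%:C ->
  Hp P -> (P + (1 + w) / (1 - w) != 0) /\ Sec (c * c - s * s) (s * c + c * s) (((1 + w) / (1 - w) * P + 1) / (P + (1 + w) / (1 - w))).
Proof.
move=> c0 s0 sc hw hP.
have [P1 hm] := @Hp_m P hP.
set m := (P - 1) / (P + 1) in hm.
have e1 : (s / c) < 1 by rewrite ltr_pdivrMr // mul1r.
have ge0 : (0 : R[i]) <= (s / c)%:C by rewrite lecR divr_ge0 // ltW.
have hz : `|w * m| <= (s / c)%:C.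
  rewrite normrM -[X in _ <= X]mulr1; apply: ler_pM => //.
have ne1 (z : R[i]) : `|z| <= (s / c)%:C -> 1 - z != 0.
  move=> hz'; apply/eqP => /eqP; rewrite subr_eq0 => /eqP z1.
  move: hz'; rewrite -z1 normr1 -[1 : R[i]]/((1 : R)%:C) lecR; lra.
have w1 := ne1 _ hw.
have z1 := ne1 _ hz.
have eP : P + (1 + w) / (1 - w) = (P + 1) * (1 - w * m) / (1 - w).
  rewrite /m; field; rewrite w1 P1 //.
split.
  by rewrite eP !mulf_neq0 // invr_eq0.
have -> : ((1 + w) / (1 - w) * P + 1) / (P + (1 + w) / (1 - w)) = (1 + w * m) / (1 - w * m).
  have e3 : P + 1 - w * (P - 1) = (P + 1) * (1 - w * m) by rewrite /m; field.
  rewrite eP /m; field; rewrite -/m e3 P1 w1 mulf_neq0 //.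
exact: msg c0 s0 sc hz.
Qed.

Section Trig.
Variable n : nat.
Hypothesis n2 : (2 <= n)%N.
Definition phi : R := pi / (2 * n)%:R.

Lemma n_gt0 : (0 : R) < n%:R.
Proof. by rewrite ltr0n; case: n n2. Qed.

Lemma phiMul k : phi *+ k = (pi / 2) * (k%:R / n%:R).
Proof.
have := n_gt0 => h; rewrite /phi -mulr_natr natrM; field.
by rewrite gt_eqF.
Qed.

Lemma phiLe (k : nat) : (k <= n)%N -> 0 <= phi *+ k <= pi / 2.
Proof.
move=> kn; have := n_gt0 => h; have p0 := pi_gt0 R.
rewrite phiMul; apply/andP; split.
  by apply: mulr_ge0; [apply: divr_ge0 => //; exact: ltW | apply: divr_ge0 => //; exact: ltW].
rewrite -[X in _ <= X]mulr1 ler_wpM2l //; first by apply: divr_ge0 => //; exact: ltW.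
by rewrite ler_pdivrMr // mul1r ler_nat.
Qed.

Lemma phiLt k : (k < n)%N -> 0 <= phi *+ k < pi / 2.
Proof.
move=> kn; have := n_gt0 => h; have p0 := pi_gt0 R.
have /andP[-> _] := phiLe _ (ltnW kn); rewrite /=.
rewrite phiMul -[X in _ < X]mulr1 ltr_pM2l //; last by apply: divr_gt0.
by rewrite ltr_pdivrMr // mul1r ltr_nat.
Qed.

Lemma cos_pos k : (k < n)%N -> 0 < cos (phi *+ k).
Proof.
move=> /phiLt /andP[h1 h2]; apply: cos_gt0_pihalf; rewrite h2 andbT.
apply: (lt_le_trans _ h1); rewrite oppr_lt0 divr_gt0 ?pi_gt0 //.
Qed.

Lemma cos_nneg k : (k <= n)%N -> 0 <= cos (phi *+ k).
Proof.
move=> /phiLe /andP[h1 h2]; apply: cos_ge0_pihalf; rewrite h2 andbT.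
apply: (le_trans _ h1); rewrite oppr_le0 divr_ge0 ?ltW ?pi_gt0 //.
Qed.

Lemma sin_nneg k : (k <= n)%N -> 0 <= sin (phi *+ k).
Proof.
move=> /phiLe /andP[h1 h2]; apply: sin_ge0_pi; rewrite h1 /=.
apply: (le_trans h2); rewrite ler_pdivrMr // ler_peMr ?ler1n ?ltW ?pi_gt0 //.
Qed.

Lemma prodSec (l : seq R[i]) : (forall x, x \in l -> Sec (cos phi) (sin phi) x) ->
  (size l <= n)%N -> Sec (cos (phi *+ size l)) (sin (phi *+ size l)) (\prod_(x <- l) x).
Proof.
elim: l => [|x l IH] hl /= hs.
  rewrite big_nil mulr0n cos0 sin0; split; first exact: oner_neq0.
  split; first by rewrite /= ler01.
  by rewrite /= normr0 mul0r mulr0.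
rewrite big_cons mulrS cosD sinD.
have hl' : forall y, y \in l -> Sec (cos phi) (sin phi) y.
  by move=> y yl; apply: hl; rewrite inE yl orbT.
have c1 : 0 < cos phi by rewrite -[phi]mulr1n; apply: cos_pos; case: n n2 => [|[]].
have c2 : 0 < cos (phi *+ size l) by exact: cos_pos.
have s1 : 0 <= sin phi by rewrite -[phi]mulr1n; apply: sin_nneg; case: n n2 => [|[]].
have s2 : 0 <= sin (phi *+ size l) by exact: sin_nneg _ (ltnW hs).
have k : 0 <= cos phi * cos (phi *+ size l) - sin phi * sin (phi *+ size l).
  by rewrite -cosD -mulrS; apply: cos_nneg.
have HH := (Sec_mul _ _ _ _ _ _ c1 c2 s1 s2 k (hl x (mem_head _ _)) (IH hl' (ltnW hs))).
exact: HH.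
Qed.

Lemma prodHp (l : seq R[i]) : (forall x, x \in l -> Sec (cos phi) (sin phi) x) ->
  (size l <= n)%N -> Hp (\prod_(x <- l) x).
Proof. by move=> h1 h2; apply: Sec_Hp; apply: prodSec. Qed.

Lemma prod_root (l : seq R[i]) : (forall x, x \in l -> Sec (cos phi) (sin phi) x) ->
  (size l <= n.+1)%N -> \prod_(x <- l) x != -1.
Proof.
case: l => [|x l] hl /= hs.
  rewrite big_nil; apply/eqP => /eqP; rewrite -subr_eq0 opprK -mulr2n pnatr_eq0 //.
rewrite big_cons; apply: (root_ne _ _ _ _ _ _ (hl x (mem_head _ _))).
  by rewrite -[phi]mulr1n; apply: cos_pos; case: n n2 => [|[]].
apply: prodHp => // y yl; apply: hl; rewrite inE yl orbT.
by [].
Qed.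
End Trig.
End Alg.
Arguments Sec {R}. Arguments Hp {R}. Arguments phi {R}.


Section Graph.
Variable R : realType.
Variables (V E : finType) (ends : E -> V * V) (beta : R[i]).
Implicit Types (U W : {set V}) (p : E * bool -> bool) (u v : V) (h g : E * bool).

Definition endp (h : E * bool) : V := if h.2 then (ends h.1).2 else (ends h.1).1.
Definition opp (h : E * bool) : E * bool := (h.1, ~~ h.2).
Definition hval (U : {set V}) (p : E * bool -> bool) (s : {ffun V -> bool}) h :=
  if endp h \in U then s (endp h) else p h.
Definition wt (U : {set V}) (p : E * bool -> bool) (s : {ffun V -> bool}) : R[i] :=
  \prod_(e : E) (if hval U p s (e, false) == hval U p s (e, true) then beta else 1).
Definition ZZ (U : {set V}) (p : E * bool -> bool) : R[i] :=
  \sum_(s : {ffun V -> bool} | [forall x, (x \notin U) ==> ~~ s x]) wt U p s.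
Definition pin (p : E * bool -> bool) u b := fun h => if endp h == u then b else p h.
Definition upd (p : E * bool -> bool) h b := fun g => if g == h then b else p g.

Lemma ZZ_ext U p1 p2 : (forall g, p1 g = p2 g) -> ZZ U p1 = ZZ U p2.
Proof.
move=> E12; apply: eq_bigr => s _; apply: eq_bigr => e _.
by rewrite /hval !E12.
Qed.

Lemma ZZ_split U p u : u \in U ->
  ZZ U p = ZZ (U :\ u) (pin p u true) + ZZ (U :\ u) (pin p u false).
Proof.
move=> uU; rewrite /ZZ (bigID (fun s : {ffun V -> bool} => s u)) /=.
have H (b : bool) :
  \sum_(s : {ffun V -> bool} | [forall x, (x \notin U) ==> ~~ s x] && (s u == b)) wt U p s
  = \sum_(s : {ffun V -> bool} | [forall x, (x \notin U :\ u) ==> ~~ s x]) wt (U :\ u) (pin p u b) s.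
  rewrite (reindex_onto (fun t : {ffun V -> bool} => [ffun x => if x == u then b else t x])
                        (fun s : {ffun V -> bool} => [ffun x => if x == u then false else s x])).
    apply: eq_big => t.
      apply/idP/idP.
        move=> /andP[/andP[/forallP A _] /eqP Ht]; apply/forallP => x.
        apply/implyP; rewrite in_setD1 negb_and negbK => /orP[/eqP->|xU].
          by rewrite -Ht ffunE eqxx.
        have := implyP (A x) xU; rewrite ffunE; case: eqP => // exu.
        by move: xU; rewrite exu uU.
      move=> /forallP A; apply/andP; split; last first.
        apply/eqP/ffunP => x; rewrite !ffunE; case: eqP => [->|] //.
        by have := implyP (A u); rewrite in_setD1 eqxx /= => /(_ isT) /negbTE.
      apply/andP; split; last by rewrite ffunE eqxx.
      apply/forallP => x; apply/implyP => xU; rewrite ffunE.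
      case: eqP => [exu|_]; first by rewrite exu uU in xU.
      by apply: (implyP (A x)); rewrite in_setD1 (negbTE xU) andbF.
    move=> _; apply: eq_bigr => e _; congr (if _ == _ then _ else _);
      rewrite /hval /pin in_setD1 ffunE; case: eqP => [->|ne] //=; rewrite ?uU //.
    move=> s /andP[_ /eqP sb]; apply/ffunP => x; rewrite !ffunE.
    by case: eqP => [->|]; rewrite ?sb.
  rewrite -H -H; congr (_ + _); apply: eq_bigl => s.
    by case: (s u).
  by case: (s u); rewrite ?andbT ?andbF.
Qed.


Lemma opp_neq h : opp h != h.
Proof. by case: h => e [] ; rewrite /opp /= -pair_eqE /= eqxx /=. Qed.

Lemma ZZ_pinned U p h : endp h \notin U -> endp (opp h) \notin U -> beta != 0 ->
  ZZ U (upd p h true) = (if p (opp h) then beta else beta^-1) * ZZ U (upd p h false).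
Proof.
case: h => e c hU oU b0.
rewrite /ZZ mulr_sumr; apply: eq_bigr => s _.
rewrite /wt (bigD1 e) //= [in RHS](bigD1 e) //= mulrA; congr (_ * _).
  move: hU oU; rewrite /opp /hval /upd /=.
  case: c => /= /negbTE -> /negbTE ->; rewrite !xpair_eqE !eqxx /=;
    case: (p _); rewrite /= ?mulr1 ?mulVf //.
apply: eq_bigr => e' ne; rewrite /hval /upd.
have n1 : ((e', false) == (e, c)) = false by rewrite -pair_eqE /= (negbTE ne).
have n2 : ((e', true) == (e, c)) = false by rewrite -pair_eqE /= (negbTE ne).
by rewrite n1 n2.
Qed.

Lemma deg_card v : #|[pred h : E * bool | endp h == v]| = mdeg ends v.
Proof.
rewrite /mdeg -!sum1_card !big_mkcond /=.
rewrite -(pair_big xpredT xpredT (fun e b => if endp (e, b) == v then 1 else 0)%N) /=.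
rewrite [\sum_(i in [set e | (ends e).1 == v]) 1]big_mkcond [\sum_(i in [set e | (ends e).2 == v]) 1]big_mkcond.
rewrite addnC -big_split /=; apply: eq_bigr => e _.
rewrite big_bool /endp /= !inE //.
Qed.

Lemma prod_seq (P : pred (E * bool)) (m : E * bool -> R[i]) :
  \prod_(h | P h) m h = \prod_(x <- [seq m h | h <- enum P]) x.
Proof. by rewrite big_map big_enum. Qed.

Lemma opp_opp h : opp (opp h) = h.
Proof. by case: h => e b; rewrite /opp /= negbK. Qed.

Variables (n : nat) (c s : R) (w : R[i]).
Hypotheses (c0 : 0 < c) (s0 : 0 <= s) (sc : s < c) (hw : `|w| <= (s / c)%:C)
  (hbeta : beta = (1 + w) / (1 - w)).
Local Notation CS := (Sec (c * c - s * s) (s * c + c * s)).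
Hypothesis Hprod : forall l : seq R[i], (forall x, x \in l -> CS x) ->
  (size l <= n)%N -> Hp (\prod_(x <- l) x).
Hypothesis Hroot : forall l : seq R[i], (forall x, x \in l -> CS x) ->
  (size l <= n.+1)%N -> \prod_(x <- l) x != -1.
Hypothesis Hdeg : forall v, (mdeg ends v <= n.+1)%N.

Lemma beta_CS : CS beta.
Proof. by rewrite hbeta; apply: msg. Qed.

Lemma betaV_CS : CS beta^-1.
Proof.
rewrite hbeta invf_div.
have -> : (1 - w) / (1 + w) = (1 + (- w)) / (1 - (- w)) by rewrite opprK.
by apply: msg; rewrite // normrN.
Qed.

Lemma beta_neq0 : beta != 0.
Proof. by case: beta_CS. Qed.

Definition Dec U := forall p v, v \notin U -> exists m : E * bool -> R[i],
  ZZ U (pin p v true) = (\prod_(h | endp h == v) m h) * ZZ U (pin p v false) /\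
  (forall h, endp h == v -> CS (m h)) /\
  (forall h, endp h == v -> endp (opp h) \notin U -> endp (opp h) != v ->
     m h = if p (opp h) then beta else beta^-1).

Lemma half_step U p h : endp h \notin U -> (forall u, u \in U -> Dec (U :\ u)) ->
  exists r, ZZ U (upd p h true) = r * ZZ U (upd p h false) /\ CS r /\
   (endp (opp h) \notin U -> r = if p (opp h) then beta else beta^-1).
Proof.
move=> hU IH; case: (boolP (endp (opp h) \in U)) => oU; last first.
  exists (if p (opp h) then beta else beta^-1); split; first exact: ZZ_pinned hU oU beta_neq0.
  by split => //; case: (p _); [exact: beta_CS | exact: betaV_CS].
set u := endp (opp h) in oU *; set W := U :\ u.
have hW : endp h \notin W by rewrite in_setD1 (negbTE hU) andbF.
have huv : endp h != u by apply: contraNneq hU => ->.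
have uW : u \notin W by rewrite in_setD1 eqxx.
have [m [em [mCS mex]]] := IH u oU (upd p h true) u uW.
have mo : m (opp h) = beta.
  by rewrite mex ?opp_opp ?eqxx // /upd eqxx.
set P := \prod_(g | (endp g == u) && (g != opp h)) m g.
have eprod : \prod_(g | endp g == u) m g = beta * P.
  by rewrite (bigD1 (opp h)) ?eqxx //= mo.
have HP : Hp P.
  rewrite /P prod_seq; apply: Hprod.
    move=> x /mapP [g]; rewrite mem_enum => /andP [gu _] ->; exact: mCS.
  rewrite size_map -cardE.
  have := cardD1 (opp h) [pred g | endp g == u]; rewrite deg_card inE eqxx /= add1n.
  move=> hc; have := Hdeg u; rewrite hc ltnS; apply: leq_trans.
  by apply: subset_leq_card; apply/subsetP => g; rewrite !inE andbC.
have ext b t : forall g, pin (upd p h b) u t g = upd (pin p u t) h b g.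
  move=> g; rewrite /pin /upd; case: (g =P h) => [->|_] //; by rewrite (negbTE huv).
have sp b : ZZ U (upd p h b) = ZZ W (upd (pin p u true) h b) + ZZ W (upd (pin p u false) h b).
  by rewrite (ZZ_split _ _ _ oU) -/W !(ZZ_ext _ _ _ (ext b _)).
have pinned t : ZZ W (upd (pin p u t) h true) =
    (if t then beta else beta^-1) * ZZ W (upd (pin p u t) h false).
  by rewrite (ZZ_pinned _ _ _ hW) ?uW ?beta_neq0 // /pin eqxx.
set X := ZZ W (upd (pin p u false) h true).
have eA : ZZ W (upd (pin p u true) h true) = beta * P * X.
  by rewrite -(ZZ_ext _ _ _ (ext true true)) em eprod /X (ZZ_ext _ _ _ (ext true false)).
have eB : ZZ W (upd (pin p u true) h false) = P * X.
  apply: (mulfI beta_neq0); rewrite mulrA -eA pinned //.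
have eY : ZZ W (upd (pin p u false) h false) = beta * X.
  by rewrite /X pinned /= mulrA divrr ?mul1r // unitfE beta_neq0.
have [nz rCS] : (P + beta != 0) /\ CS ((beta * P + 1) / (P + beta)).
  rewrite hbeta; exact: edge_map.
exists ((beta * P + 1) / (P + beta)); split; last by split => // /negP.
rewrite !sp eA eB eY /X; field; exact: nz.
Qed.

Lemma Dec_step U : (forall u, u \in U -> Dec (U :\ u)) -> Dec U.
Proof.
move=> IH p v vU.
have tel : forall l : seq (E * bool), uniq l -> (forall h, h \in l -> endp h == v) ->
  exists m : E * bool -> R[i],
   ZZ U (fun g => if endp g == v then g \in l else p g) = (\prod_(h <- l) m h) * ZZ U (pin p v false) /\
   (forall h, h \in l -> CS (m h)) /\
   (forall h, h \in l -> endp (opp h) \notin U -> endp (opp h) != v ->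
     m h = if p (opp h) then beta else beta^-1).
  elim=> [|h l IHl].
    move=> _ _; exists (fun _ => 1); split; last by split.
    by rewrite big_nil mul1r; apply: ZZ_ext => g.
  rewrite cons_uniq => /andP [hl ul] hv.
  have hv' : forall g, g \in l -> endp g == v by move=> g gl; apply: hv; rewrite in_cons gl orbT.
  have [m [em [mCS mex]]] := IHl ul hv'.
  have hvh : endp h == v by apply: hv; rewrite mem_head.
  set rho := (fun g => if endp g == v then g \in l else p g).
  have hU : endp h \notin U by rewrite (eqP hvh).
  have [r [er [rCS rex]]] := half_step U rho h hU IH.
  exists (fun g => if g == h then r else m g); split.
    rewrite big_cons eqxx.
    rewrite (eq_big_seq m); last by move=> g gl; case: eqP => // egh; move: hl; rewrite -egh gl.
    rewrite -mulrA -em.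
    have -> : ZZ U (fun g => if endp g == v then g \in h :: l else p g) = ZZ U (upd rho h true).
      apply: ZZ_ext => g; rewrite /upd /rho in_cons; case: (g =P h) => [->|_] //.
      by rewrite hvh.
    rewrite er; congr (_ * _); apply: ZZ_ext => g; rewrite /upd /rho.
    by case: (g =P h) => [->|_] //; rewrite hvh (negbTE hl).
  split.
    move=> g; rewrite in_cons; case: (g =P h) => [_ _|_ /= gl] //; exact: mCS.
  move=> g; rewrite in_cons; case: (g =P h) => [-> _ oU ov|_ /= gl]; last exact: mex.
  by rewrite rex // /rho (negbTE ov).
have [m [em [mCS mex]]] := tel (enum [pred h | endp h == v]) (enum_uniq _)
   (fun h => ltac:(by rewrite mem_enum)).
exists m; split.
  rewrite (_ : \prod_(h | endp h == v) m h = \prod_(h <- enum [pred h | endp h == v]) m h); last first.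
    by rewrite big_enum.
  rewrite -em; apply: ZZ_ext => g.
  by rewrite /pin mem_enum inE; case: eqP.
split.
  by move=> h hv; apply: mCS; rewrite mem_enum.
by move=> h hv; apply: mex; rewrite mem_enum.
Qed.

Lemma Dec_all k U : (#|U| <= k)%N -> Dec U.
Proof.
elim: k U => [|k IHk] U hU; apply: Dec_step => u uU.
  by move: hU; rewrite leqn0 cards_eq0 => /eqP U0; rewrite U0 inE in uU.
apply: IHk; move: hU; rewrite (cardsD1 u U) uU add1n ltnS //.
Qed.

Lemma ZZ0 p : ZZ set0 p != 0.
Proof.
rewrite /ZZ (big_pred1 [ffun => false]); last first.
  move=> t /=; apply/forallP/eqP => [H|->].
    by apply/ffunP => x; rewrite ffunE; have := H x; rewrite inE /= => /negbTE.
  by move=> x; rewrite ffunE implybT.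
apply/prodf_neq0 => e _; case: ifP => _; [exact: beta_neq0 | exact: oner_neq0].
Qed.

Lemma NZ_all k U : (#|U| <= k)%N -> forall p, ZZ U p != 0.
Proof.
elim: k U => [|k IHk] U hU p.
  by move: hU; rewrite leqn0 cards_eq0 => /eqP ->; apply: ZZ0.
have [->|[v vU]] := set_0Vmem U; first exact: ZZ0.
have hW : (#|U :\ v| <= k)%N by move: hU; rewrite (cardsD1 v U) vU add1n ltnS.
have vW : v \notin U :\ v by rewrite in_setD1 eqxx.
have [m [em [mCS _]]] := Dec_all _ _ (leqnn _) p v vW.
rewrite (ZZ_split _ _ _ vU) em -{2}[ZZ _ (pin p v false)]mul1r -mulrDl.
apply: mulf_neq0; last exact: IHk.
rewrite addr_eq0 prod_seq; apply: Hroot.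
  move=> x /mapP [g]; rewrite mem_enum => gv ->; exact: mCS.
by rewrite size_map -cardE deg_card.
Qed.

Lemma Z_eq p : Z_Ising ends beta = ZZ setT p.
Proof.
rewrite /Z_Ising /ZZ; apply: eq_big => [t|t _].
  by apply/esym/forallP => x; rewrite in_setT.
rewrite /mono -prodr_const big_mkcond; apply: eq_bigr => e _.
by rewrite inE /hval !in_setT.
Qed.
End Graph.


Theorem theorem1p1 (R : realType) (Delta : nat) (V E : finType)
    (ends : E -> V * V) (beta : R[i]) :
  (3 <= Delta)%N ->
  (forall v : V, (mdeg ends v <= Delta)%N) ->
  beta != -1 ->
  `|beta - 1| / `|beta + 1| <= (eps_Delta R Delta)%:C ->
  Z_Ising ends beta != 0.
Proof.
move=> D3 Hd bn1 hle.
set n := (Delta - 1)%N.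
have n2 : (2 <= n)%N by rewrite /n; move: D3; case: (Delta) => [|[|[|]]].
have Dn : Delta = n.+1 by rewrite /n; move: D3; case: (Delta) => [|[|[|]]].
have hn : (0 : R) < n%:R by rewrite ltr0n; move: n2; case: (n).
have p0 := pi_gt0 R.
set th : R := pi / (4 * n)%:R.
set c := cos th; set s := sin th.
have th2 : th + th = phi n by rewrite /th /phi !natrM; field; rewrite gt_eqF.
have n4 : (0 : R) < (4 * n)%:R by rewrite ltr0n muln_gt0 /=; move: n2; case: (n).
have th0 : 0 < th by apply: divr_gt0.
have thlt : th < pi / 2.
  rewrite /th ltr_pM2l // ltf_pV2 ?posrE ?n4 ?ltr0n //.
  by rewrite ltr_nat (leq_trans _ (leq_mul (leqnn 4) (ltnW n2))).
have c0 : 0 < c.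
  apply: cos_gt0_pihalf; rewrite thlt andbT; apply: (lt_trans _ th0).
  by rewrite oppr_lt0 divr_gt0.
have s0 : 0 <= s.
  apply: sin_ge0_pi; rewrite ltW //= ltW // (lt_le_trans thlt) //.
  by rewrite ler_pdivrMr // ler_peMr ?ler1n // ltW.
have cphi : cos (phi n) = c * c - s * s by rewrite -th2 cosD.
have sphi : sin (phi n) = s * c + c * s by rewrite -th2 sinD.
have sc : s < c.
  have := @cos_pos R n n2 1 n2; rewrite mulr1n cphi => h; nra.
have b1 : beta + 1 != 0 by rewrite addr_eq0.
set w := (beta - 1) / (beta + 1).
have hw : `|w| <= (s / c)%:C.
  have u : beta + 1 \is a GRing.unit by rewrite unitfE.
  move: hle; rewrite /w /eps_Delta /tan -/n -/th -/c -/s normrM (normrV u) //.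
have two : (2 : R[i]) != 0 by rewrite pnatr_eq0.
have hbeta : beta = (1 + w) / (1 - w).
  rewrite /w; field; rewrite b1 /=.
  by have -> : beta + 1 - (beta - 1) = 2 by ring.
have Hprod : forall l : seq R[i], (forall x, x \in l -> Sec (c * c - s * s) (s * c + c * s) x) ->
    (size l <= n)%N -> Hp (\prod_(x <- l) x).
  by move=> l; rewrite -cphi -sphi; apply: prodHp.
have Hroot : forall l : seq R[i], (forall x, x \in l -> Sec (c * c - s * s) (s * c + c * s) x) ->
    (size l <= n.+1)%N -> \prod_(x <- l) x != -1.
  by move=> l; rewrite -cphi -sphi; apply: prod_root.
have Hdeg : forall v, (mdeg ends v <= n.+1)%N by rewrite -Dn.
rewrite (@Z_eq R V E ends beta (fun _ => false)).
exact: (@NZ_all R V E ends beta n c s w c0 s0 sc hw hbeta Hprod Hroot Hdeg _ _ (leqnn _)).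
Qed.
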